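(* For every $\varepsilon>0$ and every deterministic strategy $A$ for the Canadian Traveller Problem, there exist a unit-weighted outerplanar graph $G$, vertices $s,t$ of $G$, and a set of edges $E_*$ such that $(G,E_* )$ is a road map and the competitive ratio of $A$ on $(G,E_* )$ is greater than $9-\varepsilon$. In other words, no deterministic strategy achieves competitive ratio $9-\varepsilon$ on all road maps $(G,E_* )$ with $G$ a unit-weighted outerplanar graph (with no restriction on the number $k$ of blocked edges).
   Context: The $k$-Canadian Traveller Problem ($k$-CTP): we are given an undirected connected graph $G=(V,E,\omega)$ with weights $\omega:E\to\mathbb{Q}^+$, a source $s\in V$ and a target $t\in V$, and a hidden set $E_*\subsetneq E$ of blocked edges with $|E_*|\le k$. The pair $(G,E_* )$ is a road map if $s$ and $t$ are connected in $G\setminus E_*$; only road maps are considered. A traveller starts at $s$ and must reach $t$. Initially $E_*$ is unknown; the traveller learns whether an edge is blocked exactly when he visits one of its endpoints. A (deterministic) strategy is an online algorithm which, given $G$, $\omega$, $s$, $t$, $k$, the sequence of vertices visited so far and the set of blocked edges revealed so far, chooses the next vertex, a neighbour of the current vertex through an edge not known to be blocked. The cost of the resulting $(s,t)$-walk is the sum of the weights of the traversed edges (with multiplicity). The competitive ratio of $A$ on $(G,E_* )$ is this cost divided by $d_{E_*}(s,t)$, the length of a shortest $(s,t)$-path in $G\setminus E_*$. A graph is unit-weighted if every edge has weight $1$, and outerplanar if it admits a planar embedding with all vertices on the outer face. *)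

(* Defs.v *)
From HB Require Import structures.
From mathcomp Require Import all_boot all_order all_algebra all_fingroup.
From mathcomp Require Import reals.
Set Implicit Arguments. Unset Strict Implicit. Unset Printing Implicit Defensive.
Import Order.TTheory GRing.Theory Num.Theory.

(* A unit-weighted simple undirected graph on the vertex set 'I_n is given by
   its edge set E : {set {set 'I_n}}, every edge being a 2-element set. *)
Definition simple_graph (n : nat) (E : {set {set 'I_n}}) : Prop :=
  forall e, e \in E -> #|e| = 2.

Definition adj (n : nat) (E : {set {set 'I_n}}) (u v : 'I_n) : bool :=
  [set u; v] \in E.

Definition walk_len (n : nat) (E : {set {set 'I_n}}) (u v : 'I_n) (l : nat) : Prop :=
  exists p : seq 'I_n, [/\ size p = l, path (adj E) u p & last u p = v].

Definition connected_graph (n : nat) (E : {set {set 'I_n}}) : Prop :=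
  forall u v : 'I_n, exists l, walk_len E u v l.

Definition sp_dist (n : nat) (E Es : {set {set 'I_n}}) (s t : 'I_n) (d : nat) : Prop :=
  walk_len (E :\: Es) s t d /\ (forall d', walk_len (E :\: Es) s t d' -> d <= d').

(* Outerplanarity: the vertices can be placed on a circle (in the cyclic order
   given by the permutation sigma) so that edges, drawn as chords, do not cross. *)
Definition outerplanar (n : nat) (E : {set {set 'I_n}}) : Prop :=
  exists sigma : {perm 'I_n},
    forall a b c d : 'I_n,
      [set a; b] \in E -> [set c; d] \in E ->
      ~ [/\ (sigma a < sigma c)%N, (sigma c < sigma b)%N & (sigma b < sigma d)%N].

Definition road_map (n : nat) (E Es : {set {set 'I_n}}) (s t : 'I_n) : Prop :=
  Es \proper E /\ exists l, walk_len (E :\: Es) s t l.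

(* A deterministic strategy: given the graph (vertex count n and edge set E;
   weights are all 1), s, t, k, the sequence of vertices visited so far (starting
   with s; its last element is the current vertex) and the set of blocked edges
   revealed so far, it returns the next vertex. *)
Definition strategy : Type :=
  forall n : nat, {set {set 'I_n}} -> 'I_n -> 'I_n -> nat ->
    seq 'I_n -> {set {set 'I_n}} -> 'I_n.

Definition valid_strategy (A : strategy) : Prop :=
  forall n (E : {set {set 'I_n}}) s t k (h : seq 'I_n) (rev : {set {set 'I_n}}),
    (exists w, [set last s h; w] \in E /\ [set last s h; w] \notin rev) ->
    [set last s h; A n E s t k h rev] \in E /\
    [set last s h; A n E s t k h rev] \notin rev.

Definition revealed (n : nat) (Es : {set {set 'I_n}}) (h : seq 'I_n) : {set {set 'I_n}} :=
  [set e in Es | has (fun v => v \in e) h].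

Fixpoint history (A : strategy) (n : nat) (E Es : {set {set 'I_n}}) (s t : 'I_n)
    (k : nat) (i : nat) : seq 'I_n :=
  match i with
  | 0 => [:: s]
  | i'.+1 => let h := history A E Es s t k i' in
             rcons h (A n E s t k h (revealed Es h))
  end.

Definition position (A : strategy) (n : nat) (E Es : {set {set 'I_n}}) (s t : 'I_n)
    (k i : nat) : 'I_n :=
  last s (history A E Es s t k i).

(* The competitive ratio of A on (G,E_* ) is > r: the walk has cost m when it
   first reaches t (infinite if it never does), and m / d > r. *)
Definition ratio_gt (R : realType) (A : strategy) (n : nat) (E Es : {set {set 'I_n}})
    (s t : 'I_n) (k : nat) (r : R) : Prop :=
  forall d, sp_dist E Es s t d ->
  forall m, position A E Es s t k m = t -> (r * d%:R < m%:R)%R.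

(* Main.v *)
Require Import Defs.
From HB Require Import structures.
From mathcomp Require Import all_boot all_order all_algebra all_fingroup.
From mathcomp Require Import reals.
From mathcomp Require Import zify ring lra.
From Stdlib Require Import Classical.
Set Implicit Arguments. Unset Strict Implicit. Unset Printing Implicit Defensive.
Import Order.TTheory GRing.Theory Num.Theory.

(* Part A: discrete cow-path lower bound (arithmetic core) *)
Local Open Scope ring_scope.

Definition stepok (w : nat -> int) := forall i, w i - 1 <= w i.+1 /\ w i.+1 <= w i + 1.

Lemma walk_lip (w : nat -> int) : stepok w -> forall i d,
  w i - d%:Z <= w (i + d)%N /\ w (i + d)%N <= w i + d%:Z.
Proof.
move=> hw i; elim=> [|d [IH1 IH2]]; first by rewrite addn0; lia.
have := hw (i + d)%N; rewrite addnS; lia.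
Qed.

Lemma walk_lip2 (w : nat -> int) : stepok w -> forall i j, (i <= j)%N ->
  w i - (j - i)%N%:Z <= w j /\ w j <= w i + (j - i)%N%:Z.
Proof. move=> hw i j ij; have := walk_lip hw i (j - i); rewrite subnKC //. Qed.

Lemma walk_ivt_pos (w : nat -> int) : stepok w -> w 0%N = 0 ->
  forall j (v : int), 0 <= v -> v <= w j -> exists2 k, (k <= j)%N & w k = v.
Proof.
move=> hw h0; elim=> [|j IH] v v0 vj.
  by exists 0%N => //; lia.
have [vj'|vj'] := lerP v (w j).
  by have [k kj wk] := IH v v0 vj'; exists k => //; lia.
exists j.+1 => //; have := hw j; lia.
Qed.

Lemma walk_ivt_neg (w : nat -> int) : stepok w -> w 0%N = 0 ->
  forall j (v : int), v <= 0 -> w j <= v -> exists2 k, (k <= j)%N & w k = v.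
Proof.
move=> hw h0 j v v0 vj.
have hw' : stepok (fun i => - w i) by move=> i; have := hw i; lia.
have [k kj wk] := walk_ivt_pos hw' ltac:(by rewrite /= h0) (j:=j) (v:=-v) ltac:(lia) ltac:(lia).
by exists k => //; lia.
Qed.

Definition sd (b : bool) (n : nat) : int := if b then n%:Z else - n%:Z.

Definition hitP (w : nat -> int) (T0 : nat) (b : bool) (n : nat) : pred nat :=
  fun j => (w j == sd b n) || (T0 <= j)%N.

Lemma hit_ex w T0 b n : exists j, hitP w T0 b n j.
Proof. by exists T0; rewrite /hitP leqnn orbT. Qed.

Definition H (w : nat -> int) (L : nat) (b : bool) (n : nat) : nat :=
  ex_minn (hit_ex w (9 * L.+1) b n).

Definition Hall (R : realType) (c : R) (w : nat -> int) (L : nat) :=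
  forall b n, (1 <= n <= L)%N -> exists j, w j = sd b n /\ (j.+1)%:R <= c * (n.+1)%:R.


Lemma H_spec (R : realType) (c : R) w L : 0 <= c -> c <= 9 -> Hall c w L ->
  forall b n, (1 <= n <= L)%N ->
  [/\ w (H w L b n) = sd b n, (forall i, (i < H w L b n)%N -> w i != sd b n)
    & ((H w L b n).+1)%:R <= c * (n.+1)%:R].
Proof.
move=> c0 c9 hall b n hn.
have [j [wj hj]] := hall b n hn.
have jT : (j < 9 * L.+1)%N.
  have : (j.+1)%:R <= (9 * L.+1)%N%:R :> R.
    apply: (le_trans hj); rewrite natrM.
    apply: ler_pM => //.
    by rewrite ler_nat; lia.
  rewrite ler_nat; lia.
rewrite /H; case: ex_minnP => m hm mmin.
have mj : (m <= j)%N by apply: mmin; rewrite /hitP wj eqxx.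
have hit : w m = sd b n.
  by move: hm; rewrite /hitP; case/orP => [/eqP //|]; lia.
split => //.
- move=> i im; apply/negP => /eqP wi.
  have := mmin i; rewrite /hitP wi eqxx => /(_ isT); lia.
- by apply: le_trans hj; rewrite ler_nat; lia.
Qed.

Definition env (R : realType) (c : R) w L :=
  [/\ stepok w, w 0%N = 0, 0 <= c, c <= 9 & Hall c w L].

Lemma Hhit (R : realType) (c : R) w L b n : env c w L -> (1 <= n <= L)%N -> w (H w L b n) = sd b n.
Proof. by case=> _ _ c0 c9 hall hn; case: (H_spec c0 c9 hall b hn). Qed.

Lemma Hmin (R : realType) (c : R) w L b n i : env c w L -> (1 <= n <= L)%N ->
  (i < H w L b n)%N -> w i != sd b n.
Proof. by case=> _ _ c0 c9 hall hn; case: (H_spec c0 c9 hall b hn) => _ h _; apply: h. Qed.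

Lemma Hbnd (R : realType) (c : R) w L b n : env c w L -> (1 <= n <= L)%N ->
  ((H w L b n).+1)%:R <= c * (n.+1)%:R.
Proof. by case=> _ _ c0 c9 hall hn; case: (H_spec c0 c9 hall b hn). Qed.

Lemma HP0 (R : realType) (c : R) w L b n m : env c w L -> (1 <= n <= L)%N -> (1 <= m <= L)%N ->
  H w L b n != H w L (~~ b) m.
Proof.
move=> he hn hm; apply/negP => /eqP e.
have h1 := Hhit b he hn; have h2 := Hhit (~~ b) he hm.
rewrite e h2 in h1; move: h1; clear e h2; case: b => /=; lia.
Qed.

Lemma HP4 (R : realType) (c : R) w L b n : env c w L -> (1 <= n <= L)%N -> (n <= H w L b n)%N.
Proof.
move=> he hn; have h1 := Hhit b he hn; case: he => hw h0 _ _ _.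
have := walk_lip2 hw (leq0n (H w L b n)); rewrite h0 subn0 h1; clear h1; case: b => /=; lia.
Qed.

Lemma HP2 (R : realType) (c : R) w L b n m : env c w L -> (1 <= n)%N -> (n < m)%N -> (m <= L)%N ->
  (H w L b n < H w L b m)%N.
Proof.
move=> he n1 nm mL.
have hm : (1 <= m <= L)%N by lia.
have hn : (1 <= n <= L)%N by lia.
have h1 := Hhit b he hm.
have [hw h0 _ _ _] := he.
have [k kH wk] : exists2 k, (k <= H w L b m)%N & w k = sd b n.
  case: b h1 => /= h1.
  - by apply: walk_ivt_pos => //; lia.
  - by apply: walk_ivt_neg => //; lia.
have kne : k != H w L b m by apply/eqP => e; move: wk; rewrite e h1; clear -nm; case: b => /=; lia.
have : ~~ (k < H w L b n)%N.
  by apply/negP => /(Hmin he hn); rewrite wk eqxx.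
lia.
Qed.

Lemma HP2' (R : realType) (c : R) w L b n m : env c w L -> (1 <= n)%N -> (n <= m)%N -> (m <= L)%N ->
  (H w L b n + (m - n) <= H w L b m)%N.
Proof.
move=> he n1; elim: m => [|m IH] nm mL; first by lia.
have [nm'|mn] := ltnP n m.+1.
  have nm2 : (n <= m)%N by lia.
  have := HP2 b he (n:=m) (m:=m.+1) ltac:(lia) (ltnSn m) mL.
  have := IH nm2 (ltnW mL); lia.
have e : n = m.+1 by lia.
by rewrite -e subnn addn0.
Qed.

Lemma HP3 (R : realType) (c : R) w L b n m : env c w L -> (1 <= n <= L)%N -> (1 <= m <= L)%N ->
  (H w L b n < H w L (~~ b) m)%N -> (H w L b n + n + m <= H w L (~~ b) m)%N.
Proof.
move=> he hn hm lt.
have h1 := Hhit b he hn; have h2 := Hhit (~~ b) he hm.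
have [hw _ _ _ _] := he.
have := walk_lip2 hw (ltnW lt); rewrite h1 h2; case: b {h1 h2 lt} => /=; lia.
Qed.

Lemma ex_max (P : pred nat) L n0 : P n0 -> (n0 <= L)%N ->
  exists e, [/\ P e, (n0 <= e)%N, (e <= L)%N & forall n, (e < n <= L)%N -> ~~ P n].
Proof.
move=> Pn0; elim: L => [|L IH] n0L.
  by exists n0; split => //; lia.
have [e1|n0L'] := eqVneq n0 L.+1.
  by exists n0; split => // n; lia.
have [e [Pe n0e eL emax]] := IH ltac:(lia).
case PL: (P L.+1).
  by exists L.+1; split => //; lia.
exists e; split => //; first lia.
move=> n hn; have [nL|] := eqVneq n L.+1; first by rewrite nL PL.
move=> nL; apply: emax; lia.
Qed.

Definition stage (R : realType) (c : R) w L (k : nat) (b : bool) (ep e S : nat) : Prop :=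
 [/\ (1 <= e <= L)%N, (ep < L)%N, (H w L b e < H w L (~~b) ep.+1)%N,
     (forall n, (e < n <= L)%N -> (H w L (~~b) ep.+1 < H w L b n)%N)
   & (2*S + ep + 1 <= H w L (~~b) ep.+1)%N ] /\
 [/\ (e + ep <= S)%N, (k <= 2*e)%N, (k <= 2*ep+1)%N & (e + 2 <= 12 * 6^k)%N].

Lemma stage_step (R : realType) (c : R) w L k b ep e S :
  env c w L -> stage c w L k b ep e S -> (e < L)%N ->
  exists e', [/\ stage c w L k.+1 (~~b) e e' (S + e'), (ep < e')%N
     & ((2*(S+e') + e + 2)%N%:R <= c * (e.+2)%:R)].
Proof.
move=> he [[e1 epL Hlt Hmax Hsum] [eS k2e k2ep ebnd]] eL.
set tau := H w L (~~b) ep.+1 in Hlt Hmax Hsum.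
set tau' := H w L b e.+1.
have ttau : (tau < tau')%N by apply: Hmax; lia.
pose P : pred nat := fun n => (H w L (~~b) n < tau')%N.
have [e' [Pe' epe' e'L e'max]] := ex_max (P := P) (n0 := ep.+1) ttau epL.
have he' : (1 <= e' <= L)%N by lia.
have he1 : (1 <= e.+1 <= L)%N by lia.
have hep1 : (1 <= ep.+1 <= L)%N by lia.
have P3 := HP3 (b := ~~b) he he' he1; rewrite negbK in P3.
have P3' := P3 Pe'.
have P2 := HP2' (~~b) he (n := ep.+1) (m := e') ltac:(lia) epe' e'L.
have bnd := Hbnd b he he1.
have key : (2*(S+e') + e + 1 <= tau')%N.
  rewrite /tau in Hsum P2; rewrite /tau'; lia.
have key2 : ((2*(S+e') + e + 2)%N%:R <= c * (e.+2)%:R).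
  apply: le_trans bnd; rewrite ler_nat; rewrite /tau' in key; lia.
have c9 : c <= 9 by case: he.
have key3 : (2*(S+e') + e + 2 <= 9 * e.+2)%N.
  rewrite -(ler_nat R); apply: le_trans key2 _; rewrite natrM.
  apply: ler_wpM2r => //.
exists e'; split => //; split; split => //.
- by rewrite negbK.
- move=> n hn; rewrite negbK.
  have := e'max n hn; rewrite /P -leqNgt leq_eqVlt => /orP [/eqP ee|//].
  have := HP0 (~~b) he (n := n) (m := e.+1) ltac:(lia) he1; rewrite negbK -/tau' -ee eqxx //.
- by rewrite negbK; lia.
- lia.
- lia.
- lia.
- rewrite expnS; lia.
Qed.
Lemma qstep (R : realType) (p Q s r S' : R) : 1 <= s -> 0 <= r -> s <= Q * r ->
  S' <= 4 * p ^+ 2 * (s - r) -> S' <= (Q - (4 * p - 4 * p ^+ 2)) * s.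
Proof.
move=> s1 r0 sQ hS.
have Q0 : 0 < Q.
  rewrite ltNge; apply/negP => Q0.
  have : Q * r <= 0 by rewrite mulr_le0_ge0.
  lra.
have h1 : Q * S' <= Q * (4 * p ^+ 2 * (s - r)) by rewrite ler_pM2l.
have h2 : Q * (4 * p ^+ 2 * (s - r)) <= 4 * p ^+ 2 * s * (Q - 1).
  have : 4 * p ^+ 2 * s <= 4 * p ^+ 2 * (Q * r).
    apply: ler_wpM2l => //; rewrite mulr_ge0 //; exact: sqr_ge0.
  lra.
have h3 : 4 * p ^+ 2 * s * (Q - 1) <= Q * ((Q - (4 * p - 4 * p ^+ 2)) * s).
  have : 0 <= (Q - 2 * p) ^+ 2 * s by rewrite mulr_ge0 // ?sqr_ge0; lra.
  have -> : (Q - 2 * p) ^+ 2 * s = Q * ((Q - (4 * p - 4 * p ^+ 2)) * s) - 4 * p ^+ 2 * s * (Q - 1) by ring.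
  lra.
have := le_trans h1 (le_trans h2 h3).
by rewrite ler_pM2l.
Qed.

Lemma stage_init (R : realType) (c : R) w L :
  env c w L -> (12 <= L)%N -> exists b e, stage c w L 1 b 0 e e.
Proof.
move=> he L1.
have h1 : (1 <= 1 <= L)%N by lia.
have [b hb] : exists b, (H w L b 1 < H w L (~~b) 1)%N.
  case hb: (H w L true 1 < H w L false 1)%N; first by exists true.
  exists false => /=; move/negbT: hb; have := HP0 true he h1 h1 => /=; lia.
set tau := H w L (~~b) 1 in hb.
pose P : pred nat := fun n => (H w L b n < tau)%N.
have [e [Pe e1 eL emax]] := ex_max (P := P) (L := L) (n0 := 1) hb ltac:(lia).
have he' : (1 <= e <= L)%N by lia.
have P3 := HP3 (b := b) he he' h1 Pe.
have P4 := HP4 b he he'.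
have bnd := Hbnd (~~b) he h1.
have c9 : c <= 9 by case: he.
have key : (tau.+1 <= 9 * 2)%N.
  rewrite -(ler_nat R); apply: le_trans bnd _; rewrite natrM.
  by apply: ler_wpM2r.
exists b, e; split; split => //.
all: rewrite /tau in P3 key; try rewrite /tau.
all: try (rewrite expn1; lia).
all: try lia.
move=> n hn; have := emax n hn; rewrite /P -leqNgt leq_eqVlt => /orP [/eqP ee|//].
have := HP0 b he (n := n) (m := 1) ltac:(lia) h1; rewrite -/tau ee eqxx //.
Qed.

Definition aa (R : realType) (c : R) := (c - 1) / 2.
Definition pp (R : realType) (c : R) := (aa c + 4) / 8.
Definition ap (R : realType) (c : R) := 4 * pp c ^+ 2.
Definition dl (R : realType) (c : R) := 4 * pp c - 4 * pp c ^+ 2.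

Definition qinv (R : realType) (c : R) (K0 k e S : nat) :=
  (K0 < k)%N -> (S%:R : R) <= (ap c - dl c * (k - K0.+1)%:R) * (S - e)%:R.

Lemma params (R : realType) (c : R) : 1 <= c -> c < 9 ->
  [/\ 0 <= aa c, aa c < ap c, 0 < dl c, 1 <= ap c & c = 2 * aa c + 1].
Proof.
move=> c1 c9; rewrite /ap /dl /pp /aa.
split.
- lra.
- have h : 0 < (9 - c) * (9 - c) by apply: mulr_gt0; lra.
  rewrite expr2; nra.
- rewrite expr2; nra.
- rewrite expr2; nra.
- lra.
Qed.

Lemma stages (R : realType) (c : R) w L E0 : env c w L -> 1 <= c -> c < 9 -> (1 <= E0)%N ->
  2 * aa c <= E0%:R * (ap c - aa c) ->
  forall k, (12 * 6^k <= L)%N -> exists b ep e S,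
    stage c w L k.+1 b ep e S /\ qinv c (2 * E0) k.+1 e S.
Proof.
move=> he c1 c9 E01 hE0.
have [a0 aap d0 ap1 ca] := params c1 c9.
elim=> [|k IH] hL.
  have [b [e st]] := stage_init he hL.
  by exists b, 0%N, e, e; split => // h; exfalso; rewrite /= in h; lia.
have hL' : (12 * 6^k <= L)%N by move: hL; rewrite expnS; lia.
have [b [ep [e [S [st qi]]]]] := IH hL'.
have [[e1 epL _ _ _] [eS k2e k2ep ebnd]] := st.
have eL : (e < L)%N by move: ebnd hL; rewrite expnS; lia.
have [e' [st' epe' key2]] := stage_step he st eL.
exists (~~b), e, e', (S + e'); split => //.
move=> Kk.
have Ee : (E0 <= e)%N by lia.
have hS' : (S + e')%:R <= aa c * (e.+2)%:R.
  have h1 : ((2 * (S + e') + e + 2)%N%:R : R) = 2 * (S + e')%:R + e%:R + 2.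
    rewrite !natrD; lra.
  have h2 : ((e.+2)%:R : R) = e%:R + 2 by rewrite -addn2 natrD.
  have h3 : c * (e%:R + 2) = (2 * aa c + 1) * (e%:R + 2) by rewrite {1}ca.
  move: key2; rewrite h1 h2 h3; lra.
have hae : aa c * (e.+2)%:R <= ap c * e%:R.
  have t1 : E0%:R * (ap c - aa c) <= e%:R * (ap c - aa c).
    apply: ler_wpM2r; first lra.
    by rewrite ler_nat.
  have t2 : e%:R * (ap c - aa c) = ap c * e%:R - aa c * e%:R by ring.
  have t3 : aa c * (e.+2)%:R = aa c * e%:R + 2 * aa c.
    by rewrite -addn2 natrD; ring.
  rewrite t3; lra.
have hS'2 := le_trans hS' hae.
have Se : (S + e' - e')%N = S by rewrite addnK.
rewrite Se.
have [kE|kE] := eqVneq k.+1 (2 * E0)%N.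
  have -> : (k.+2 - (2 * E0).+1)%N = 0%N by rewrite -kE subnn.
  rewrite mulr0 subr0; apply: le_trans hS'2 _; apply: ler_wpM2l; first lra.
  by rewrite ler_nat (leq_trans (leq_addr ep e) eS).
have Kk' : (2 * E0 < k.+1)%N by clear -Kk kE; lia.
have qi' := qi Kk'.
have -> : (k.+2 - (2 * E0).+1)%N = ((k.+1 - (2 * E0).+1).+1)%N by clear -Kk'; lia.
set m := (k.+1 - (2 * E0).+1)%N in qi' *.
have eS2 : (e <= S)%N by apply: (leq_trans (leq_addr ep e) eS).
have hsr : (S%:R : R) - (S - e)%N%:R = e%:R by rewrite (natrB _ eS2); lra.
have S1 : 1 <= (S%:R : R) by rewrite ler1n; apply: leq_trans eS2; case/andP: e1.
have := @qstep R (pp c) (ap c - dl c * m%:R) S%:R (S - e)%N%:R (S + e')%:R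
  S1 (ler0n _ _) qi' ltac:(by rewrite hsr).
move=> h; apply: (le_trans h); apply: ler_wpM2r => //.
rewrite le_eqVlt; apply/orP; left; apply/eqP.
rewrite -addn1 natrD /dl /ap; ring.
Qed.

Lemma core_main (R : realType) (c : R) : 1 <= c -> c < 9 ->
  exists L : nat, (12 <= L)%N /\ forall w, stepok w -> w 0%N = 0 -> ~ Hall c w L.
Proof.
move=> c1 c9; have [a0 aap d0 ap1 ca] := params c1 c9.
set x := 2 * aa c / (ap c - aa c).
have x0 : 0 <= x by rewrite /x divr_ge0 //; lra.
set E0 := (Num.bound x).+1.
have hE0 : 2 * aa c <= E0%:R * (ap c - aa c).
  have : x <= E0%:R.
    apply: le_trans (ltW (archi_boundP x0)) _; rewrite ler_nat /E0; lia.
  move=> h.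
  have -> : 2 * aa c = x * (ap c - aa c) by rewrite /x divfK //; apply/eqP; lra.
  by apply: ler_wpM2r => //; lra.
set y := (ap c - 1) / dl c.
have y0 : 0 <= y by rewrite /y divr_ge0 //; lra.
set N := Num.bound y.
have hN : ap c - dl c * N%:R <= 1.
  have h := archi_boundP y0.
  have : ap c - 1 = y * dl c by rewrite /y divfK //; apply/eqP; lra.
  have : y * dl c <= N%:R * dl c by apply: ler_wpM2r; lra.
  lra.
exists (12 * 6 ^ (2 * E0 + N))%N; split.
  by rewrite leq_pmulr // expn_gt0.
move=> w hw h0 hall.
have he : env c w (12 * 6 ^ (2 * E0 + N)) by split => //; lra.
have [b [ep [e [S [st qi]]]]] := stages he c1 c9 (isT : (1 <= E0)%N) hE0 (leqnn _).
have [[e1 _ _ _ _] [eS _ _ _]] := st.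
have := qi ltac:(clear; lia).
have -> : ((2 * E0 + N).+1 - (2 * E0).+1)%N = N by clear; lia.
have eS2 : (e <= S)%N by apply: (leq_trans (leq_addr ep e) eS).
move=> h.
have h2 : (ap c - dl c * N%:R) * (S - e)%N%:R <= (S - e)%N%:R.
  rewrite -[X in _ <= X]mul1r; apply: ler_wpM2r => //.
have := le_trans h h2; rewrite ler_nat.
case/andP: e1 => e1 _; clear -e1 eS2; lia.
Qed.

Local Close Scope ring_scope.

(* Part B: the fan graph and the adversary *)

Lemma set2_eqE (T : finType) (u v i j : T) : [set u; v] = [set i; j] -> i != j ->
  ((u == i) && (v == j)) || ((u == j) && (v == i)).
Proof.
move=> E ij.
have hu : u \in [set i; j] by rewrite -E set21.
have hv : v \in [set i; j] by rewrite -E set22.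
have hi : i \in [set u; v] by rewrite E set21.
have hj : j \in [set u; v] by rewrite E set22.
rewrite !in_set2 in hu hv hi hj.
case/orP: hu => /eqP hu; subst u.
  case/orP: hv => /eqP hv; subst v; last by rewrite !eqxx.
  by move: hj; rewrite orbb eq_sym (negbTE ij).
case/orP: hv => /eqP hv; subst v; first by rewrite !eqxx orbT.
by move: hi; rewrite orbb (negbTE ij).
Qed.

Definition goodE N (u v : 'I_N.+1) : bool :=
  ((val v == (val u).+1) && (val v < N)) || ((val v == N) && (val u < N)).
Definition gE N : {set {set 'I_N.+1}} :=
  [set e | [exists u, exists v, (e == [set u; v]) && goodE u v]].
Definition gEs0 N : {set {set 'I_N.+1}} :=
  [set e | [exists u : 'I_N.+1, (e == [set u; ord_max]) && (val u < N)]].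
Definition gEsx N (x : 'I_N.+1) := gEs0 N :\ [set x; ord_max].

Lemma goodE_neq N (u v : 'I_N.+1) : goodE u v -> u != v.
Proof.
rewrite /goodE => h; apply/negP => /eqP e; move: h; rewrite e; lia.
Qed.

Lemma memE N (u v : 'I_N.+1) : ([set u; v] \in gE N) = goodE u v || goodE v u.
Proof.
apply/idP/idP.
- rewrite inE => /existsP [i /existsP [j /andP [/eqP e g]]].
  have := set2_eqE e (goodE_neq g).
  by case/orP => /andP [/eqP -> /eqP ->]; rewrite g ?orbT.
- case/orP => g; rewrite inE; apply/existsP.
  + by exists u; apply/existsP; exists v; rewrite eqxx g.
  + by exists v; apply/existsP; exists u; rewrite setUC eqxx g.
Qed.

Lemma memEs0 N (e : {set 'I_N.+1}) : e \in gEs0 N -> ord_max \in e.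
Proof. by rewrite inE => /existsP [u /andP [/eqP -> _]]; rewrite set22. Qed.

Lemma memEs0' N (u : 'I_N.+1) : (val u < N)%N -> [set u; ord_max] \in gEs0 N.
Proof. by move=> h; rewrite inE; apply/existsP; exists u; rewrite eqxx h. Qed.

Lemma Es0_sub N : gEs0 N \subset gE N.
Proof.
apply/subsetP => e he; have := he; rewrite inE => /existsP [u /andP [/eqP ee uN]].
by rewrite ee memE /goodE /= eqxx uN orbT.
Qed.

Lemma gE_simple N : simple_graph (gE N).
Proof.
move=> e; rewrite inE => /existsP [u /existsP [v /andP [/eqP -> g]]].
by rewrite cards2 (goodE_neq g).
Qed.

Lemma adjT N (u : 'I_N.+1) : (val u < N)%N -> adj (gE N) u ord_max /\ adj (gE N) ord_max u.
Proof.
move=> h; rewrite /adj memE setUC memE /goodE /= eqxx h.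
by rewrite !orbT.
Qed.

Lemma gE_connected N : connected_graph (gE N).
Proof.
move=> u v.
have [uT|uT] := eqVneq u ord_max; have [vT|vT] := eqVneq v ord_max.
- by exists 0%N, [::]; rewrite uT vT.
- have vN : (val v < N)%N by move: vT; rewrite -val_eqE /=; have := ltn_ord v; lia.
  rewrite uT; exists 1%N, [:: v]; split => //=; rewrite andbT; exact: (adjT vN).2.
- have uN : (val u < N)%N by move: uT; rewrite -val_eqE /=; have := ltn_ord u; lia.
  rewrite vT; exists 1%N, [:: ord_max]; split => //=; rewrite andbT; exact: (adjT uN).1.
- have vN : (val v < N)%N by move: vT; rewrite -val_eqE /=; have := ltn_ord v; lia.
  have uN : (val u < N)%N by move: uT; rewrite -val_eqE /=; have := ltn_ord u; lia.
  exists 2%N, [:: ord_max; v]; split => //=; rewrite andbT (adjT uN).1; exact: (adjT vN).2.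
Qed.

Lemma gE_outer N : outerplanar (gE N).
Proof.
exists 1%g => a b c d.
rewrite !perm1 !memE /goodE /=.
have := ltn_ord a; have := ltn_ord b; have := ltn_ord c; have := ltn_ord d.
move=> hd hc hb ha h1 h2 [l1 l2 l3].
move: h1 h2 l1 l2 l3; lia.
Qed.

Lemma hist_succ (A : strategy) n (E Es : {set {set 'I_n}}) s t k i :
  history A E Es s t k i.+1 =
  rcons (history A E Es s t k i) (A n E s t k (history A E Es s t k i) (revealed Es (history A E Es s t k i))).
Proof. by []. Qed.

Lemma pos_succ (A : strategy) n (E Es : {set {set 'I_n}}) s t k i :
  position A E Es s t k i.+1 =
  A n E s t k (history A E Es s t k i) (revealed Es (history A E Es s t k i)).
Proof. by rewrite /position hist_succ last_rcons. Qed.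

Lemma pos_in_hist (A : strategy) n (E Es : {set {set 'I_n}}) s t k i :
  position A E Es s t k i \in history A E Es s t k i.
Proof.
case: i => [|i]; first by rewrite /position /= mem_seq1.
by rewrite pos_succ hist_succ mem_rcons mem_head.
Qed.

Lemma mem_hist (A : strategy) n (E Es : {set {set 'I_n}}) s t k i x :
  x \in history A E Es s t k i -> exists2 j, (j <= i)%N & position A E Es s t k j = x.
Proof.
elim: i => [|i IH]; first by rewrite /= mem_seq1 => /eqP ->; exists 0%N.
rewrite hist_succ mem_rcons in_cons => /orP [/eqP ->|].
  by exists i.+1 => //; rewrite pos_succ.
by move/IH => [j ji pj]; exists j => //; apply: leqW.
Qed.

Lemma revealed_eq N (x : 'I_N.+1) (h : seq 'I_N.+1) :
  x \notin h -> ord_max \notin h -> revealed (gEsx x) h = revealed (gEs0 N) h.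
Proof.
move=> xh Th; apply/setP => e; rewrite !inE.
have [ee|ne] := eqVneq e [set x; ord_max]; last by [].
rewrite /=; apply/esym/negbTE/negP => /andP [_ /hasP [v vh]].
rewrite ee in_set2 => /orP [] /eqP ev; subst v.
  by rewrite vh in xh.
by rewrite vh in Th.
Qed.

Lemma goodE_succ N (u v : 'I_N.+1) : val v = (val u).+1 -> (val v < N)%N -> goodE u v.
Proof. by move=> e h; rewrite /goodE e eqxx -e h. Qed.

Lemma walk_step (A : strategy) N (s : 'I_N.+1) k i : valid_strategy A -> (2 <= N)%N ->
  let p := position A (gE N) (gEs0 N) s ord_max k i in
  (val p < N)%N ->
  let q := position A (gE N) (gEs0 N) s ord_max k i.+1 in
  (val q < N)%N /\ ((val q == (val p).+1) || (val p == (val q).+1)).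
Proof.
move=> hA N2 p pN q.
set h := history A (gE N) (gEs0 N) s ord_max k i.
have lh : last s h = p by [].
have ph : p \in h by apply: pos_in_hist.
have notrev : forall w : 'I_N.+1, (val w < N)%N -> [set p; w] \notin revealed (gEs0 N) h.
  move=> w wN; rewrite inE; apply/negP => /andP [/memEs0 + _].
  rewrite in_set2 => /orP [] /eqP e.
  - by move: pN; rewrite -e /=; lia.
  - by move: wN; rewrite -e /=; lia.
have [] := hA _ (gE N) s ord_max k h (revealed (gEs0 N) h).
  rewrite lh.
  have [pN1|pN1] := ltnP (val p).+1 N.
  - have wlt : ((val p).+1 < N.+1)%N by lia.
    exists (Ordinal wlt); split; last by apply: notrev; exact: pN1.
    by rewrite memE goodE_succ.
  - have p1 : (0 < val p)%N by lia.
    have pm : ((val p).-1 < N.+1)%N by lia.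
    have pm' : ((val p).-1 < N)%N by lia.
    exists (Ordinal pm); split; last by apply: notrev; exact: pm'.
    rewrite memE (@goodE_succ _ (Ordinal pm) p) ?orbT //=; by rewrite prednK.
rewrite lh -/q.
have -> : A N.+1 (gE N) s ord_max k h (revealed (gEs0 N) h) = q by rewrite /q pos_succ.
rewrite memE /goodE => /orP [/orP [/andP [e1 e2]|/andP [e1 e2]]|/orP [/andP [e1 e2]|/andP [e1 e2]]] nr.
- by split => //; rewrite e1.
- exfalso; have qT : q = ord_max by apply: val_inj; apply/eqP.
  move/negP: nr; apply; rewrite qT inE memEs0' //=; apply/hasP; exists p => //; exact: set21.
- by split; [lia | rewrite e1 orbT].
- by move: pN; rewrite (eqP e1); lia.
Qed.

Lemma walk_all (A : strategy) N (s : 'I_N.+1) k : valid_strategy A -> (2 <= N)%N ->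
  (val s < N)%N -> forall i, (val (position A (gE N) (gEs0 N) s ord_max k i) < N)%N.
Proof.
move=> hA N2 sN; elim=> [|i IH]; first by [].
by have [] := walk_step hA N2 IH.
Qed.

Lemma T_notin_h0 (A : strategy) N (s : 'I_N.+1) k i : valid_strategy A -> (2 <= N)%N ->
  (val s < N)%N -> ord_max \notin history A (gE N) (gEs0 N) s ord_max k i.
Proof.
move=> hA N2 sN; apply/negP => /mem_hist [j _ pj].
by have := walk_all k hA N2 sN j; rewrite pj /=; lia.
Qed.

Lemma agree (A : strategy) N (s : 'I_N.+1) k (x : 'I_N.+1) : valid_strategy A -> (2 <= N)%N ->
  (val s < N)%N -> forall i, x \notin history A (gE N) (gEs0 N) s ord_max k i ->
  history A (gE N) (gEsx x) s ord_max k i.+1 = history A (gE N) (gEs0 N) s ord_max k i.+1 /\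
  history A (gE N) (gEsx x) s ord_max k i = history A (gE N) (gEs0 N) s ord_max k i.
Proof.
move=> hA N2 sN.
have one : forall i, history A (gE N) (gEsx x) s ord_max k i = history A (gE N) (gEs0 N) s ord_max k i ->
  x \notin history A (gE N) (gEs0 N) s ord_max k i ->
  history A (gE N) (gEsx x) s ord_max k i.+1 = history A (gE N) (gEs0 N) s ord_max k i.+1.
  move=> i e xh; rewrite !hist_succ e revealed_eq //; exact: T_notin_h0.
elim=> [|i IH] xh; first by split => //; apply: one.
have xh' : x \notin history A (gE N) (gEs0 N) s ord_max k i.
  by move: xh; rewrite hist_succ mem_rcons in_cons negb_or => /andP [].
have [e1 _] := IH xh'.
by split => //; apply: one.
Qed.

Lemma reach (A : strategy) N (s : 'I_N.+1) k (x : 'I_N.+1) m : valid_strategy A -> (2 <= N)%N ->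
  (val s < N)%N -> position A (gE N) (gEsx x) s ord_max k m = ord_max ->
  exists2 j, (j < m)%N & position A (gE N) (gEs0 N) s ord_max k j = x.
Proof.
move=> hA N2 sN; case: m => [|m].
  by rewrite /position /= => e; move: sN; rewrite e /=; lia.
move=> pm.
have [xh|xh] := boolP (x \in history A (gE N) (gEs0 N) s ord_max k m).
  by have [j jm pj] := mem_hist xh; exists j.
have [e1 _] := agree hA N2 sN xh.
move: pm; rewrite /position e1 -/(position _ _ _ _ _ _ _) => pm.
by have := walk_all k hA N2 sN m.+1; rewrite pm /=; lia.
Qed.

Lemma walk_ext n (G : {set {set 'I_n}}) u v w l :
  walk_len G u v l -> adj G v w -> walk_len G u w l.+1.
Proof.
move=> [p [sp pp lp]] a; exists (rcons p w); split.
- by rewrite size_rcons sp.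
- by rewrite rcons_path pp lp a.
- by rewrite last_rcons.
Qed.

Lemma path_adj N (x a b : 'I_N.+1) : (val b < N)%N -> val b = (val a).+1 ->
  adj (gE N :\: gEsx x) a b /\ adj (gE N :\: gEsx x) b a.
Proof.
move=> bN ba.
have nin : forall e : {set 'I_N.+1}, ord_max \notin e -> e \notin gEsx x.
  move=> e Te; rewrite in_setD1 negb_and; apply/orP; right; apply/negP => /memEs0.
  by rewrite (negbTE Te).
have Tn : ord_max \notin [set a; b].
  rewrite in_set2 negb_or; apply/andP; split; apply/negP => /eqP e.
  - by move: bN ba; rewrite -e /=; lia.
  - by move: bN; rewrite -e /=; lia.
have e2 : [set b; a] = [set a; b] by apply/setP => y; rewrite !in_set2 orbC.
rewrite /adj e2 in_setD (nin _ Tn) memE goodE_succ //.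
Qed.

Lemma val_inord N m : (m <= N)%N -> val (inord m : 'I_N.+1) = m.
Proof. by move=> h; apply: inordK. Qed.

Lemma walk_right N L (x : 'I_N.+1) j : (L + j < N)%N ->
  walk_len (gE N :\: gEsx x) (inord L) (inord (L + j)) j.
Proof.
elim: j => [|j IH] h; first by exists [::]; rewrite addn0.
apply: walk_ext (IH ltac:(lia)) _.
have [] := @path_adj N x (inord (L + j)) (inord (L + j.+1)).
- by rewrite val_inord; lia.
- by rewrite !val_inord; lia.
by [].
Qed.

Lemma walk_left N L (x : 'I_N.+1) j : (L < N)%N -> (j <= L)%N ->
  walk_len (gE N :\: gEsx x) (inord L) (inord (L - j)) j.
Proof.
move=> LN; elim: j => [|j IH] h; first by exists [::]; rewrite subn0.
apply: walk_ext (IH ltac:(lia)) _.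
have [] := @path_adj N x (inord (L - j.+1)) (inord (L - j)).
- by rewrite val_inord; lia.
- by rewrite !val_inord; lia.
by [].
Qed.

Lemma not_hall (R : realType) (c : R) w L : ~ Hall c w L ->
  exists b n, (1 <= n <= L)%N /\ forall j, w j = sd b n -> ~ ((j.+1)%:R <= c * (n.+1)%:R)%R.
Proof.
move=> nh; apply: NNPP => nex; apply: nh => b n hn.
apply: NNPP => nj; apply: nex; exists b, n; split => // j wj hj; apply: nj.
by exists j.
Qed.

Theorem theorem2 (R : realType) (eps : R) (A : strategy) :
  (0 < eps)%R -> valid_strategy A ->
  exists (n : nat) (E : {set {set 'I_n}}) (s t : 'I_n) (Es : {set {set 'I_n}}) (k : nat),
    [/\ simple_graph E, connected_graph E, outerplanar E,
        road_map E Es s t /\ (#|Es| <= k)%N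
      & ratio_gt A E Es s t k (9 - eps)%R].
Proof.
move=> eps0 hA.
set r := (9 - eps)%R.
set c : R := if (r < 1)%R then 1%R else r.
have c1 : (1 <= c)%R by rewrite /c; case: ifP => h //; rewrite leNgt h.
have c9 : (c < 9)%R by rewrite /c; case: ifP => _; rewrite /r; lra.
have rc : (r <= c)%R by rewrite /c; case: ifP => h //; apply: ltW.
have [L [L12 Hcore]] := core_main c1 c9.
set N := (2 * L).+1.
have N2 : (2 <= N)%N by rewrite /N; lia.
have LN : (L < N)%N by rewrite /N; lia.
set s : 'I_N.+1 := inord L.
have vs : val s = L by rewrite val_inord //; lia.
have sN : (val s < N)%N by rewrite vs.
set k := #|gEs0 N|.
pose pos0 i := position A (gE N) (gEs0 N) s ord_max k i.
pose w i : int := ((val (pos0 i))%:Z - L%:Z)%R.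
have hw : stepok w.
  move=> i; have := walk_step (i := i) (k := k) hA N2 (walk_all k hA N2 sN i).
  rewrite /w /pos0 => [[_ /orP [/eqP e|/eqP e]]]; rewrite e; lia.
have w0 : w 0%N = 0%R by rewrite /w /pos0 /position /= vs subrr.
have [b [m [hm Hm]]] := not_hall (Hcore w hw w0).
have [xv [xvN hxv]] : exists xv, (xv < N)%N /\ (xv%:Z - L%:Z = sd b m)%R.
  by case: b {Hm}; [exists (L+m)%N | exists (L - m)%N]; split; rewrite /N /sd; lia.
set x : 'I_N.+1 := inord xv.
have vx : val x = xv by rewrite val_inord //; lia.
have wlk : walk_len (gE N :\: gEsx x) s x m.
  rewrite /x /s; case: b {Hm} hxv => /= e.
  - have -> : xv = (L + m)%N by lia.
    by apply: walk_right; rewrite /N; lia.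
  - have -> : xv = (L - m)%N by lia.
    by apply: walk_left; lia.
have xNs : (val x < N)%N by rewrite vx.
have xT : [set x; ord_max] \in gE N :\: gEsx x.
  rewrite in_setD in_setD1 eqxx /= memE /goodE /= eqxx xNs.
  by rewrite orbT.
have wlkT : walk_len (gE N :\: gEsx x) s ord_max m.+1 by apply: walk_ext wlk xT.
exists N.+1, (gE N), s, ord_max, (gEsx x), k; split.
- exact: gE_simple.
- exact: gE_connected.
- exact: gE_outer.
- split; last by apply: subset_leq_card; apply: subD1set.
  split; last by exists m.+1.
  rewrite properE; apply/andP; split.
    apply: subset_trans (Es0_sub N); exact: subD1set.
  have xTE : [set x; ord_max] \in gE N by move: xT; rewrite in_setD => /andP [].
  apply/negP => /subsetP /(_ _ xTE).
  by rewrite in_setD1 eqxx.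
- move=> d [_ dmin] m' pm.
  have dm : (d <= m.+1)%N by apply: dmin.
  have [j jm pj] := reach hA N2 sN pm.
  have wj : w j = sd b m.
    by rewrite /w /pos0 pj vx.
  have hlt : (c * (m.+1)%:R < (j.+1)%:R)%R by rewrite ltNge; apply/negP; exact: (Hm j wj).
  have c0 : (0 <= c)%R by lra.
  apply: (le_lt_trans (y := c * (m.+1)%:R)%R).
    apply: (le_trans (y := c * d%:R)%R).
      by apply: ler_wpM2r.
    by apply: ler_wpM2l => //; rewrite ler_nat.
  apply: (lt_le_trans hlt); rewrite ler_nat; lia.
Qed.
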